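(* Let $G$ and $H$ be finite abelian groups, written additively, of the same even order $k$, and let $f:G\to H$ be semi-planar. Suppose $S(G,H;f)$ splits into two substructures $S_1$ and $S_2$ with $\mathcal{L}(0,0)\in S_1$. Then there is a subgroup $B$ of $H$ of index $2$ such that either (i) for all $a\in G$, $b\in H$: $\mathcal{L}(a,b)\in S_1$ if and only if $b\in B$; or (ii) there is a subgroup $A$ of $G$ of index $2$ such that, for any $g\in G\setminus A$ and $h\in H\setminus B$, and all $a\in G$, $b\in H$: $\mathcal{L}(a,b)\in S_1$ if and only if ($a\in A$ and $b\in B$) or ($a\in A+g$ and $b\in B+h$).
   Context: A function $f:G\to H$ is semi-planar if for every non-identity $a\in G$ and every $y\in H$, the equation $f(x+a)-f(x)=y$ has either $0$ or $2$ solutions $x\in G$. The incidence structure $S(G,H;f)$ has points $(x,y)\in G\times H$ and lines $\mathcal{L}(a,b)$ for $(a,b)\in G\times H$, with $(x,y)$ incident with $\mathcal{L}(a,b)$ iff $y=f(x-a)+b$. Its incidence graph is the bipartite graph on points and lines with an edge for each incident pair. $S(G,H;f)$ splits into two substructures $S_1,S_2$ if its incidence graph has exactly two connected components; $S_1,S_2$ are the incidence structures formed by the points and lines of the two components, and $\mathcal{L}(a,b)\in S_i$ means the line lies in component $S_i$. *)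

(* Defs.v *)
From mathcomp Require Import all_boot all_order all_algebra.
Set Implicit Arguments. Unset Strict Implicit. Unset Printing Implicit Defensive.
Import GRing.Theory.
Local Open Scope ring_scope.

Definition semi_planar (G H : finZmodType) (f : G -> H) : Prop :=
  forall (a : G) (y : H), a != 0 ->
    let n := #|[set x : G | f (x + a) - f x == y]| in
    (n == 0%N) || (n == 2%N).

Definition is_subgroup (G : finZmodType) (A : {set G}) : Prop :=
  0 \in A /\ forall x y, x \in A -> y \in A -> x - y \in A.

Definition index2 (G : finZmodType) (A : {set G}) : Prop :=
  #|G| = (2 * #|A|)%N.

Definition coset_add (G : finZmodType) (A : {set G}) (g : G) : {set G} :=
  [set a + g | a in A].

(* Vertices of the incidence graph of S(G,H;f): inl (x,y) is the point (x,y),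
   inr (a,b) is the line L(a,b). *)
Definition vertex (G H : finZmodType) := ((G * H) + (G * H))%type.

Definition incident (G H : finZmodType) (f : G -> H) (p l : G * H) : bool :=
  p.2 == f (p.1 - l.1) + l.2.

Definition incid_rel (G H : finZmodType) (f : G -> H) : rel (vertex G H) :=
  fun u v => match u, v with
             | inl p, inr l => incident f p l
             | inr l, inl p => incident f p l
             | _, _ => false
             end.

Definition splits_in_two (G H : finZmodType) (f : G -> H) : Prop :=
  n_comp (incid_rel f) predT = 2%N.

Definition in_S1 (G H : finZmodType) (f : G -> H) (a : G) (b : H) : Prop :=
  connect (incid_rel f) (inr (0, 0)) (inr (a, b)).

(* Main.v *)
Require Import Defs.
From mathcomp Require Import all_boot all_order all_algebra.
From mathcomp Require Import zify.
Import GRing.Theory.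
Set Implicit Arguments. Unset Strict Implicit.
Local Open Scope ring_scope.

Section Graph.
Variable T : finType.
Variable e : rel T.
Hypothesis esym : symmetric e.

Lemma nc_three x y z : n_comp e predT = 2%N ->
  ~~ connect e x y -> ~~ connect e x z -> ~~ connect e y z -> False.
Proof.
move=> Hn nxy nxz nyz.
have cs := sym_connect_sym esym.
set R := fingraph.root e x |: (fingraph.root e y |: [set fingraph.root e z]).
have sub : R \subset predI (fingraph.roots e) (mem predT).
  apply/subsetP => r; rewrite !inE => /orP [|/orP []] /eqP -> /=;
  by rewrite roots_root.
have := subset_leq_card sub; rewrite /n_comp_mem in Hn.
have -> : #|predI (fingraph.roots e) (mem predT)| = 2%N by exact: Hn.
rewrite /R !cardsU1 cards1 !inE.
rewrite !(root_connect cs) (negbTE nxy) (negbTE nxz) (negbTE nyz) /=.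
by [].
Qed.

Lemma nc_two x0 : n_comp e predT = 2%N -> exists x, ~~ connect e x0 x.
Proof.
move=> Hn; apply/existsP; apply: contraT; rewrite negb_exists => /forallP H.
have cs := sym_connect_sym esym.
have sub : predI (fingraph.roots e) (mem predT) \subset pred1 (fingraph.root e x0).
  apply/subsetP => r; rewrite !inE /= => /andP [/eqP rr _].
  have := H r; rewrite negbK => /(fingraph.rootP cs) ->.
  by rewrite rr.
have := subset_leq_card sub; rewrite card1.
rewrite /n_comp_mem in Hn.
have -> : #|predI (fingraph.roots e) (mem predT)| = 2%N by exact: Hn.
by [].
Qed.

Lemma connect_morph (h : T -> T) : (forall x y, e x y -> e (h x) (h y)) ->
  forall x y, connect e x y -> connect e (h x) (h y).
Proof.
move=> He x y /connectP [p]; elim: p x => [|z p IH] x /=.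
  by move=> _ ->; exact: connect0.
case/andP=> exz pz ly.
exact: connect_trans (connect1 (He _ _ exz)) (IH _ pz ly).
Qed.
End Graph.

Lemma half_card (K : finZmodType) (X : {set K}) (h0 : K) :
  (forall x, (x + h0 \in X) = ~~ (x \in X)) -> #|K| = (2 * #|X|)%N.
Proof.
move=> Hx.
have eq : ~: X = [set x + h0 | x in X].
  apply/setP => y; rewrite inE; apply/idP/imsetP.
    move=> ny; exists (y - h0); last by rewrite subrK.
    by rewrite -[_ \in X]negbK -Hx subrK.
  by case=> x xX ->; rewrite Hx xX.
have c : #|~: X| = #|X|.
  by rewrite eq card_imset //; apply: addIr.
have := cardsC X; rewrite c => <-.
by rewrite mul2n addnn.
Qed.

Definition trv (G H : finZmodType) (u : G * H) (w : vertex G H) : vertex G H :=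
  match w with
  | inl p => inl (p.1 + u.1, p.2 + u.2)
  | inr l => inr (l.1 + u.1, l.2 + u.2)
  end.

Lemma trv_incid (G H : finZmodType) (f : G -> H) (u : G * H) (x y : vertex G H) :
  incid_rel f x y -> incid_rel f (trv u x) (trv u y).
Proof.
case: x => [[p1 p2]|[l1 l2]]; case: y => [[q1 q2]|[m1 m2]] //=;
rewrite /incident /= => /eqP ->;
by rewrite opprD addrACA subrr addr0 addrA eqxx.
Qed.

Lemma incid_sym (G H : finZmodType) (f : G -> H) : symmetric (incid_rel f).
Proof. by move=> [p|l] [q|m]. Qed.

Theorem theorem4 (G H : finZmodType) (k : nat) (f : G -> H) :
  #|G| = k -> #|H| = k -> ~~ odd k ->
  semi_planar f ->
  splits_in_two f ->
  exists B : {set H}, is_subgroup B /\ index2 B /\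
    ((forall (a : G) (b : H), in_S1 f a b <-> b \in B) \/
     (exists A : {set G}, is_subgroup A /\ index2 A /\
        forall (g : G) (h : H), g \notin A -> h \notin B ->
          forall (a : G) (b : H),
            in_S1 f a b <->
            ((a \in A /\ b \in B) \/
             (a \in coset_add A g /\ b \in coset_add B h)))).
Proof.
move=> _ _ _ _ Hsplit.
set e := incid_rel f.
have esym : symmetric e := @incid_sym G H f.
have cs : connect_sym e := sym_connect_sym esym.
have shift : forall (a c : G) (b d : H) u v,
    connect e (inr (a, b)) (inr (c, d)) ->
    connect e (inr (a + u, b + v)) (inr (c + u, d + v)).
  move=> a c b d u v H1.
  exact: (connect_morph (h := trv (u, v)) (@trv_incid G H f (u, v)) H1).
pose S (a : G) (b : H) := connect e (inr (0, 0)) (inr (a, b)).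
have CS : forall a b c d, connect e (inr (a, b)) (inr (c, d)) = S (c - a) (d - b).
  move=> a b c d; apply/idP/idP => H1.
    by have := shift _ _ _ _ (- a) (- b) H1; rewrite !subrr.
  by have := shift _ _ _ _ a b H1; rewrite !add0r !subrK.
have SB : forall a b c d, S (a - c) (b - d) = (S a b == S c d).
  move=> a b c d; rewrite -(CS c d a b).
  case Hab: (S a b); case Hcd: (S c d) => /=.
  - apply: connect_trans Hab; by rewrite cs.
  - apply/negbTE/negP => C; move/negbT: Hcd => /negP; apply.
    by apply: connect_trans Hab _; rewrite cs.
  - apply/negbTE/negP => C; move/negbT: Hab => /negP; apply.
    exact: connect_trans Hcd C.
  - apply: contraT => C.
    exfalso; apply: (nc_three esym (x := inr (0, 0)) (y := inr (c, d)) (z := inr (a, b)) Hsplit) => //.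
    + by rewrite -/(S c d) Hcd.
    + by rewrite -/(S a b) Hab.
have S00 : S 0 0 by exact: connect0.
have SnegB : forall b, S 0 (- b) = S 0 b.
  by move=> b; have := SB 0 0 0 b; rewrite subrr sub0r S00; case: (S 0 b).
have SnegA : forall a, S (- a) 0 = S a 0.
  by move=> a; have := SB 0 0 a 0; rewrite subrr sub0r S00; case: (S a 0).
have Sfull : forall a b, S a b = (S a 0 == S 0 b).
  by move=> a b; have := SB a 0 0 (- b); rewrite subr0 sub0r opprK SnegB.
have Spt : forall a, exists b, S a b.
  move=> a; exists (f 0 - f (0 - a)).
  apply: (connect_trans (y := inl (0, f 0))); apply: connect1.
    by rewrite /e /= /incident /= subrr addr0.
  by rewrite /e /= /incident /= addrC subrK.
have [u [v nSuv]] : exists u v, ~~ S u v.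
  have [w nw] := nc_two esym (inr (0, 0)) Hsplit.
  case: w nw => [[x y]|[a b]] nw; last by exists a, b.
  exists 0, (y - f (x - 0)); apply: contra nw => Hs.
  apply: connect_trans Hs _; apply: connect1.
  by rewrite /e /= /incident /= addrC subrK.
set A := [set a | S a 0].
set B := [set b | S 0 b].
have SAB : forall a b, S a b = ((a \in A) == (b \in B)).
  by move=> a b; rewrite !inE.
have [h0 h0B] : exists h0, h0 \notin B.
  apply/existsP; apply: contraT; rewrite negb_exists => /forallP /= allB.
  have allB' : forall b, b \in B by move=> b; have := allB b; rewrite negbK.
  have uA : u \notin A by move: nSuv; rewrite SAB allB'; case: (u \in A).
  have [b Sb] := Spt u.
  by move: Sb; rewrite SAB allB' (negbTE uA).
have subB : is_subgroup B.
  split; first by rewrite inE.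
  move=> x y; rewrite !inE => Hx Hy.
  by have := SB 0 x 0 y; rewrite subrr Hx Hy.
have subA : is_subgroup A.
  split; first by rewrite inE.
  move=> x y; rewrite !inE => Hx Hy.
  by have := SB x 0 y 0; rewrite subrr Hx Hy.
have memB : forall h x, h \notin B -> (x - h \in B) = ~~ (x \in B).
  move=> h x; rewrite !inE => hB.
  by have := SB 0 x 0 h; rewrite subrr (negbTE hB); case: (S 0 x).
have memA : forall g x, g \notin A -> (x - g \in A) = ~~ (x \in A).
  move=> g x; rewrite !inE => gA.
  by have := SB x 0 g 0; rewrite subrr (negbTE gA); case: (S x 0).
have cosetE : forall (K : finZmodType) (X : {set K}) g x,
    (x \in coset_add X g) = (x - g \in X).
  move=> K X g x; apply/imsetP/idP.
    by case=> y yX ->; rewrite addrK.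
  by move=> Hx; exists (x - g) => //; rewrite subrK.
exists B; split => //; split.
  apply: (half_card (h0 := - h0)) => x; exact: memB.
case: (boolP [forall a, a \in A]) => [/forallP allA | ].
  left => a b; rewrite /in_S1 -/(S a b) SAB allA.
  by case: (b \in B).
rewrite negb_forall => /existsP [g0 g0A].
right; exists A; split => //; split.
  apply: (half_card (h0 := - g0)) => x; exact: memA.
move=> g h gA hB a b.
rewrite /in_S1 -/(S a b) SAB !cosetE memA // memB //.
case: (a \in A); case: (b \in B) => /=; split => //; intuition.
Qed.
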